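(* For an integer $N\geq2$ let $$L^\star(N)=\max\Big\{(N_1+1)(N_3(N_1+N_2)+3N_2+3)-5\ :\ N_1,N_3\in\mathbb{N},\ N_2\in\mathbb{N}_+,\ 2(2N_1+N_2)+N_3(N_1+1)=N\Big\}.$$ Then $\lim_{N\to\infty}\frac{N^2}{2(2L^\star(N)+1)}=\frac{23}{12}$.
   Context: $L^\star(N)$ is the largest aperture of a Kl{\o}ve array (parameters $N_1,N_2,N_3$) with $N$ sensors; since this array has a contiguous sum co-array, its number of contiguous degrees of freedom is $H=2L^\star(N)+1$ and the asymptotic redundancy is $R_\infty=\lim_{N\to\infty}N^2/(2H)$. *)

(* Defs.v *)
From mathcomp Require Import all_boot all_order all_algebra.
From mathcomp Require Import all_classical all_reals all_analysis.
Set Implicit Arguments. Unset Strict Implicit. Unset Printing Implicit Defensive.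

Definition klove_adm (N N1 N2 N3 : nat) : bool :=
  (0 < N2) && (2 * (2 * N1 + N2) + N3 * (N1 + 1) == N).

(* Aperture (N1+1)(N3(N1+N2)+3N2+3) - 5; the subtracted quantity is >= 6
   whenever N2 >= 1, so the truncated subtraction is exact. *)
Definition klove_aperture (N1 N2 N3 : nat) : nat :=
  (N1 + 1) * (N3 * (N1 + N2) + 3 * N2 + 3) - 5.

(* L*(N): maximum over admissible parameters. Every admissible parameter is
   bounded by N, so ranging over 'I_(N+1)^3 covers all of them. *)
Definition Lstar (N : nat) : nat :=
  \max_(p : 'I_(N.+1) * 'I_(N.+1) * 'I_(N.+1) | klove_adm N p.1.1 p.1.2 p.2)
     klove_aperture p.1.1 p.1.2 p.2.

(* Main.v *)
From Stdlib Require Import ZArith Lia.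
Require Import Defs.
From mathcomp Require Import all_boot all_order all_algebra.
From mathcomp Require Import all_classical all_reals all_analysis.
From mathcomp Require Import zify ring lra.
Import Order.TTheory GRing.Theory Num.Theory numFieldNormedType.Exports.

Section KZ.
Local Open Scope Z_scope.
Lemma keyZ (A B y : Z) : 23 * (y*(A+B)+3*A*B) <= 3*((4*A+2*B+y)*(4*A+2*B+y)).
Proof.
have h1 : 0 <= (6*y + A - 11 * B)*(6*y + A - 11 * B) by apply: Z.square_nonneg.
have h2 : 0 <= (5*A - B)*(5*A - B) by apply: Z.square_nonneg.
nia.
Qed.
Lemma lowZ (N1 e : Z) : -23 <= e <= 22 -> 0 <= N1 ->
  3*((23*N1+e)*(23*N1+e)) <= 23*((N1+1)*(6*(23*N1+e) - 69*N1 - 51) - 5) + 7000.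
Proof. move=> he hN; nia. Qed.
Lemma lowZ2 (N n1 z : Z) : z = 6*N - 69*n1 - 51 -> -23 <= N - 23*n1 <= 22 -> 0 <= n1 ->
  3*(N*N) <= 23*((n1+1)*z - 5) + 7000.
Proof. move=> hz he hn; have := lowZ n1 (N - 23*n1) he hn. subst z.
have -> : 23*n1 + (N - 23*n1) = N by ring. lia. Qed.
End KZ.

Lemma key (A B y : nat) : 23 * (y*(A+B)+3*A*B) <= 3*((4*A+2*B+y)^2).
Proof. have := keyZ (Z.of_nat A) (Z.of_nat B) (Z.of_nat y). lia. Qed.

Lemma Lstar_ub N : 23 * Lstar N <= 3 * (N + 6)^2.
Proof.
rewrite /Lstar; apply: (big_ind (fun x => 23 * x <= 3 * (N + 6)^2)).
- by [].
- move=> x y hx hy; lia.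
move=> [[a b] c] /andP[h2 /eqP hN] /=.
rewrite /klove_aperture.
move: h2 hN; move: (nat_of_ord a) (nat_of_ord b) (nat_of_ord c) => {}a {}b {}c h2 hN.
have hk := key (a+1) (b+1) (c*(a+1)).
have -> : N + 6 = 4*(a+1)+2*(b+1)+c*(a+1) by rewrite -hN; ring.
have -> : (a + 1) * (c * (a + b) + 3 * b + 3) = c*(a+1)*(a+b) + 3*(a+1)*(b+1) by ring.
have hm : c*(a+1)*(a+b) <= c*(a+1)*((a+1)+(b+1)) by apply: leq_mul => //; lia.
lia.
Qed.

Lemma Lstar_lb N : 200 <= N -> 3 * N^2 <= 23 * Lstar N + 7 * 1000.
Proof.
move=> hN.
pose k := N %/ 23.
pose N1 := k + (N + k + 1) %% 2.
pose N2 := (N - 13 * N1 - 9) %/ 2.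
have hk : 23 * k <= N < 23 * k + 23 by rewrite /k; lia.
have hs : N1 = k \/ N1 = k.+1 by rewrite /N1; lia.
have hpar : 2 * N2 = N - 13 * N1 - 9 by rewrite /N2 /N1; lia.
have h1 : N1 < N.+1 by lia.
have h2 : N2 < N.+1 by lia.
have h3 : 9 < N.+1 by lia.
pose p := (Ordinal h1, Ordinal h2, Ordinal h3).
have adm : klove_adm N N1 N2 9.
  apply/andP; split; last apply/eqP; lia.
have := @leq_bigmax_cond _ (fun p : 'I_(N.+1) * 'I_(N.+1) * 'I_(N.+1) => klove_adm N p.1.1 p.1.2 p.2)
  (fun p : 'I_(N.+1) * 'I_(N.+1) * 'I_(N.+1) => klove_aperture p.1.1 p.1.2 p.2) p adm.
rewrite -/(Lstar N) /= /klove_aperture => hle.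
have hin : 9 * (N1 + N2) + 3 * N2 + 3 = 6 * N - 69 * N1 - 51 by lia.
rewrite hin in hle.
have he1 : N <= 23 * N1 + 22 by lia.
have he2 : 23 * N1 <= N + 23 by lia.
have hpos : 69 * N1 + 51 <= 6 * N by lia.
move: hle he1 he2 hpos; clear; clearbody N1; move: (Lstar N) N1 => L n1 hle he1 he2 hpos.
move: hle hpos; set z := 6 * N - 69 * n1 - 51 => hle hpos.
have hz : z + 69 * n1 + 51 = 6 * N by rewrite /z; lia.
move: hle hz; clearbody z => hle hz.
have := lowZ2 (Z.of_nat N) (Z.of_nat n1) (Z.of_nat z).
rewrite -mulnn; lia.
Qed.

Section RealPart.
Local Open Scope classical_set_scope.
Local Open Scope ring_scope.
Lemma real_bound (R : realType) (x l : R) : 200 <= x -> 23* l <= 3*(x+6)^+2 ->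
  3* x^+2 <= 23* l + 7 * 1000 -> 0 <= l -> `|23/12 - x^+2/(2*(2* l+1))| <= 100/x.
Proof.
move=> hx hu hl l0.
have x0 : 0 < x by lra.
have d0 : 0 < 2*(2* l+1) by lra.
set d := 2*(2* l+1) in d0 *.
have p0 : 0 < 12* d* x by apply: mulr_gt0 => //; apply: mulr_gt0.
have e1 : (23/12 - x^+2/d) * (12* d* x) = 23* d* x - 12* x^+3.
  by field; rewrite gt_eqF.
have e2 : (100/x) * (12* d* x) = 1200* d by field; rewrite gt_eqF.
have e3 : (- (100/x)) * (12* d* x) = - (1200* d) by rewrite mulNr e2.
rewrite ler_norml; apply/andP; split.
- by rewrite -(ler_pM2r p0) e3 e1 /d; nra.
- by rewrite -(ler_pM2r p0) e2 e1 /d; nra.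
Qed.

Theorem mainTheorem11 (R : realType) :
  (fun N : nat => ((N ^ 2)%N%:R : R) / ((2 * (2 * Lstar N + 1))%N%:R))
    @ \oo --> (23%:R / 12%:R : R).
Proof.
apply/cvgrPdist_le => eps eps0.
pose M := maxn 200 (Num.trunc (100/eps)).+1.
exists M => // n /= hn.
have hn200 : (200 <= n)%N by move: hn; rewrite /M; lia.
have hnM : ((Num.trunc (100/eps)).+1 <= n)%N by move: hn; rewrite /M; lia.
have hu := Lstar_ub n.
move: hu; rewrite -(ler_nat R) !natrM !natrD -!expr2 => hu.
have hl := Lstar_lb n hn200.
move: hl; rewrite -(ler_nat R) (natrD R (23 * Lstar n)) !natrM -!expr2 => hl.
have hx : (200 : R) <= n%:R by rewrite ler_nat.
have l0 : (0 : R) <= (Lstar n)%:R by [].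
have hb := @real_bound R _ _ hx hu hl l0.
have -> : (Lstar n)%:R + ((Lstar n)%:R + 0) = 2 * (Lstar n)%:R :> R by ring.
apply: le_trans hb _.
have hT := truncnS_gt (100/eps).
have hT2 : ((Num.trunc (100/eps)).+1%:R : R) <= n%:R by rewrite ler_nat.
have x0 : (0 : R) < n%:R by lra.
rewrite ler_pdivrMr //.
have : 100 / eps < n%:R by lra.
rewrite ltr_pdivrMr // => h; lra.
Qed.
End RealPart.
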